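(* Let $L_1\geq 1$, $L_2\geq 2$, and let $A\in\mathbb{R}^{J\times N}$ have one-hot columns. Suppose $\sigma$ is Lipschitz continuous with constant $B>0$. Then for all parameters $\{K_l,b_l,c_l\}_{l=1}^{L_1}$ and $\{\hat W_{L_2},\hat W_l,\hat b_l,\hat c_l\}_{l=1}^{L_2-1}$ (of compatible sizes), $$\mathcal{L}(\phi_{\mathrm{CNN}}(\hat X;\theta),A)\leq C_B\cdot\sqrt{L_1+L_2-1}\cdot\mathcal{L}^{\mathrm{CNN}}_{\mathrm S},$$ where $C_B=\max\{\sqrt2,\,2B,\,2B^{L_1+L_2-1}\}$.
   Context: Cross-entropy: for $\boldsymbol z\in\mathbb{R}^J$ and one-hot $\boldsymbol\alpha$ (entries in $\{0,1\}$ summing to 1), $\ell(\boldsymbol z,\boldsymbol\alpha)=-\sum_j\alpha_j\ln\big(e^{z_j}/\sum_ke^{z_k}\big)$; for $Z=[\boldsymbol z_1\cdots\boldsymbol z_N]$, $\mathcal{L}_{\mathrm{vec}}(Z,A)=[\ell(\boldsymbol z_n,\boldsymbol\alpha_n)]_{n=1}^N$ and $\mathcal{L}(Z,A)=\frac1N\sum_n\ell(\boldsymbol z_n,\boldsymbol\alpha_n)$. Input data $\hat X\in\mathbb{R}^{d\times N}$ (columns are vectorized input images). The CNN (single channel) is $\phi_{\mathrm{CNN}}(\boldsymbol x;\theta)=\hat W_{L_2}\sigma(\hat W_{L_2-1}\sigma(\cdots\sigma(\hat W_1P_{L_1}\sigma(K_{L_1}P_{L_1-1}\sigma(\cdots P_1\sigma(K_1\boldsymbol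 x+b_1)\cdots)+b_{L_1})+\hat b_1)\cdots)+\hat b_{L_2-1})$, where $K_l$ are matrices (representing convolutions), $P_l$ are fixed matrices (representing pooling), $b_l,\hat b_l$ are bias vectors, $\hat W_l$ are weight matrices, all of compatible sizes, $\sigma$ acts entrywise, and $\phi_{\mathrm{CNN}}(\hat X;\theta)$ applies it columnwise. With $\mathbf 1\in\mathbb{R}^N$ all-ones, weights: $\omega_{L_1}=\big(\prod_{k=2}^{L_2}\|\hat W_k\|_{\mathrm F}^2\big)\|\hat W_1P_{L_1}\|_{\mathrm F}^2$, $\omega_l=\omega_{L_1}\prod_{j=l+1}^{L_1}\|K_jP_{j-1}\|_{\mathrm F}^2$ for $l=1,\dots,L_1-1$, $\hat\omega_l=\prod_{k=l+1}^{L_2}\|\hat W_k\|_{\mathrm F}^2$ for $l=1,\dots,L_2-1$. Define $T=\|\mathcal{L}_{\mathrm{vec}}(\hat W_{L_2}\sigma(\hat c_{L_2-1}),A)\|_2^2+\sum_{l=2}^{L_1}\omega_l\|K_lP_{l-1}\sigma(c_{l-1})+b_l\mathbf 1^\top-c_l\|_{\mathrm F}^2+\omega_1\|K_1\hat X+b_1\mathbf 1^\top-c_1\|_{\mathrm F}^2+\sum_{l=2}^{L_2-1}\hat\omega_l\|\hat W_l\sigma(\hat c_{l-1})+\hat b_l\mathbf 1^\top-\hat c_l\|_{\mathrm F}^2+\hat\omega_1\|\hat W_1P_{L_1}\sigma(c_{L_1})+\hat b_1\mathbf 1^\top-\hat c_1\|_{\mathrm F}^2$, and $\mathcal{L}^{\mathrm{CNN}}_{\mathrm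 S}=\frac1{\sqrt N}T^{1/2}$. *)

(* Defs.v *)
From HB Require Import structures.
From mathcomp Require Import all_boot all_order all_algebra.
From mathcomp Require Import reals.
From mathcomp Require Import sequences exp.
Set Implicit Arguments. Unset Strict Implicit. Unset Printing Implicit Defensive.
Import Order.TTheory GRing.Theory Num.Theory.
Local Open Scope ring_scope.

Section CNN.
Variable R : realType.

Definition frob2 (m n : nat) (M : 'M[R]_(m, n)) : R :=
  \sum_(i < m) \sum_(j < n) M i j ^+ 2.

Definition xent (J : nat) (z alpha : 'cV[R]_J) : R :=
  - \sum_(j < J) alpha j 0 * ln (expR (z j 0) / \sum_(k < J) expR (z k 0)).

Definition Lvec (J N : nat) (Z A : 'M[R]_(J, N)) : 'rV[R]_N :=
  \row_(n < N) xent (col n Z) (col n A).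

Definition Lmean (J N : nat) (Z A : 'M[R]_(J, N)) : R :=
  N%:R^-1 * \sum_(n < N) xent (col n Z) (col n A).

Definition one_hot_cols (J N : nat) (A : 'M[R]_(J, N)) : Prop :=
  forall n : 'I_N, (forall j : 'I_J, A j n = 0 \/ A j n = 1) /\
                   \sum_(j < J) A j n = 1.

Definition lipschitz_with (sigma : R -> R) (B : R) : Prop :=
  forall x y : R, `|sigma x - sigma y| <= B * `|x - y|.

Definition smap (sigma : R -> R) (m n : nat) (M : 'M[R]_(m, n)) : 'M[R]_(m, n) :=
  map_mx sigma M.

(* ----- architecture (0-indexed layers) -----
   Convolutional layers i = 0 .. L1-1 (paper's l = i+1):
     K i : 'M_(m i, qin d p i), with qin d p 0 = d and qin d p (j+1) = p j,
     P i : 'M_(p i, m i), b i : 'cV_(m i), c i : 'M_(m i, N).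
   Fully connected hidden layers j = 0 .. L2-2 (paper's l = j+1):
     Wh j : 'M_(n j, fin j), with fin 0 = p (L1-1), fin (j+1) = n j,
     bh j : 'cV_(n j), ch j : 'M_(n j, N).
   Output layer: Wl : 'M_(J, n (L2-2))  (paper's hat W_{L2}). *)
Definition qin (d : nat) (p : nat -> nat) (i : nat) : nat :=
  match i with 0 => d | S j => p j end.

Definition fin (L1 : nat) (p n : nat -> nat) (j : nat) : nat :=
  match j with 0 => p L1.-1 | S k => n k end.

Variables (sigma : R -> R) (d J : nat) (L1 L2 : nat) (m p n : nat -> nat).
Variable K : forall i : nat, 'M[R]_(m i, qin d p i).
Variable P : forall i : nat, 'M[R]_(p i, m i).
Variable b : forall i : nat, 'cV[R]_(m i).
Variable Wh : forall j : nat, 'M[R]_(n j, fin L1 p n j).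
Variable bh : forall j : nat, 'cV[R]_(n j).
Variable Wl : 'M[R]_(J, n L2.-2).

Fixpoint conv_pre (x : 'cV[R]_d) (i : nat) : 'cV[R]_(m i) :=
  match i as i0 return 'cV[R]_(m i0) with
  | 0 => K 0 *m x + b 0
  | S j => K (S j) *m (P j *m smap sigma (conv_pre x j)) + b (S j)
  end.

Fixpoint fc_pre (x : 'cV[R]_d) (j : nat) : 'cV[R]_(n j) :=
  match j as j0 return 'cV[R]_(n j0) with
  | 0 => Wh 0 *m (P L1.-1 *m smap sigma (conv_pre x L1.-1)) + bh 0
  | S k => Wh (S k) *m smap sigma (fc_pre x k) + bh (S k)
  end.

Definition phi_CNN (x : 'cV[R]_d) : 'cV[R]_J :=
  Wl *m smap sigma (fc_pre x L2.-2).

Definition phi_CNN_mat (N : nat) (X : 'M[R]_(d, N)) : 'M[R]_(J, N) :=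
  \matrix_(j < J, k < N) phi_CNN (col k X) j 0.

Variable N : nat.
Variable c : forall i : nat, 'M[R]_(m i, N).
Variable ch : forall j : nat, 'M[R]_(n j, N).

Definition ones : 'rV[R]_N := const_mx 1.

(* ||K_l P_{l-1}||_F^2 for the paper's l = i+1 >= 2 (i >= 1) *)
Definition KP2 (i : nat) : R :=
  match i with 0 => 0 | S j => frob2 (K (S j) *m P j) end.

Definition omega_last : R :=
  (\prod_(1 <= k < L2.-1) frob2 (Wh k)) * frob2 Wl * frob2 (Wh 0 *m P L1.-1).

Definition omega (i : nat) : R :=
  omega_last * \prod_(i.+1 <= k < L1) KP2 k.

Definition omegah (j : nat) : R :=
  (\prod_(j.+1 <= k < L2.-1) frob2 (Wh k)) * frob2 Wl.

Definition conv_res (X : 'M[R]_(d, N)) (i : nat) : 'M[R]_(m i, N) :=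
  match i as i0 return 'M[R]_(m i0, N) with
  | 0 => K 0 *m X + b 0 *m ones - c 0
  | S j => K (S j) *m (P j *m smap sigma (c j)) + b (S j) *m ones - c (S j)
  end.

Definition fc_res (j : nat) : 'M[R]_(n j, N) :=
  match j as j0 return 'M[R]_(n j0, N) with
  | 0 => Wh 0 *m (P L1.-1 *m smap sigma (c L1.-1)) + bh 0 *m ones - ch 0
  | S k => Wh (S k) *m smap sigma (ch k) + bh (S k) *m ones - ch (S k)
  end.


Definition Tlift (X : 'M[R]_(d, N)) (A : 'M[R]_(J, N)) : R :=
  frob2 (Lvec (Wl *m smap sigma (ch L2.-2)) A)
  + \sum_(0 <= i < L1) omega i * frob2 (conv_res X i)
  + \sum_(0 <= j < L2.-1) omegah j * frob2 (fc_res j).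

Definition LS_CNN (X : 'M[R]_(d, N)) (A : 'M[R]_(J, N)) : R :=
  (Num.sqrt (N%:R))^-1 * Num.sqrt (Tlift X A).

End CNN.

(* Main.v *)
Require Import Defs.
From HB Require Import structures.
From mathcomp Require Import all_boot all_order all_algebra.
From mathcomp Require Import reals sequences exp.
From mathcomp Require Import ring lra zify.
Import Order.TTheory GRing.Theory Num.Theory.
Local Open Scope ring_scope.
Set Implicit Arguments. Unset Strict Implicit. Unset Printing Implicit Defensive.

Section Aux.
Variable R : realType.

Lemma cs_sq (I : Type) (r : seq I) (u v : I -> R) :
  (\sum_(i <- r) u i * v i) ^+ 2 <=
  (\sum_(i <- r) u i ^+ 2) * (\sum_(i <- r) v i ^+ 2).
Proof.
have h : forall i j, (u i * v j - u j * v i) ^+ 2 =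
   u i ^+ 2 * v j ^+ 2 + v i ^+ 2 * u j ^+ 2 - 2 * ((u i * v i) * (u j * v j)).
  by move=> i j; ring.
have H0 : 0 <= \sum_(i <- r) \sum_(j <- r) (u i * v j - u j * v i) ^+ 2.
  by apply: sumr_ge0 => i _; apply: sumr_ge0 => j _; apply: sqr_ge0.
have E : \sum_(i <- r) \sum_(j <- r) (u i * v j - u j * v i) ^+ 2 =
   2 * ((\sum_(i <- r) u i ^+ 2) * (\sum_(i <- r) v i ^+ 2) - (\sum_(i <- r) u i * v i) ^+ 2).
  rewrite (eq_bigr (fun i => \sum_(j <- r) (u i ^+ 2 * v j ^+ 2 + v i ^+ 2 * u j ^+ 2
        - 2 * ((u i * v i) * (u j * v j))))); last first.
    by move=> i _; apply: eq_bigr => j _; apply: h.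
  rewrite (eq_bigr (fun i => u i ^+ 2 * \sum_(j <- r) v j ^+ 2 + v i ^+ 2 * \sum_(j <- r) u j ^+ 2
        - 2 * (u i * v i) * \sum_(j <- r) (u j * v j))); last first.
    move=> i _; rewrite sumrB big_split /= !mulr_sumr; congr (_ + _ - _).
    by apply: eq_bigr => j _; rewrite mulrA.
  rewrite sumrB big_split /= -!mulr_suml -mulr_sumr.
  ring.
move: H0; rewrite E pmulr_rge0 // subr_ge0 //.
Qed.

Lemma cs (I : Type) (r : seq I) (u v : I -> R) :
  \sum_(i <- r) u i * v i <=
  Num.sqrt (\sum_(i <- r) u i ^+ 2) * Num.sqrt (\sum_(i <- r) v i ^+ 2).
Proof.
rewrite -sqrtrM; last by apply: sumr_ge0 => i _; apply: sqr_ge0.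
apply: le_trans (ler_norm _) _.
rewrite -sqrtr_sqr ler_sqrt; first exact: cs_sq.
by apply: mulr_ge0; apply: sumr_ge0 => i _; apply: sqr_ge0.
Qed.


Definition nF (a b : nat) (M : 'M[R]_(a, b)) := Num.sqrt (frob2 M).

Lemma frob2_ge0 a b (M : 'M[R]_(a, b)) : 0 <= frob2 M.
Proof. by apply: sumr_ge0 => i _; apply: sumr_ge0 => j _; apply: sqr_ge0. Qed.

Lemma nF_ge0 a b (M : 'M[R]_(a, b)) : 0 <= nF M.
Proof. exact: sqrtr_ge0. Qed.

Lemma nF_sq a b (M : 'M[R]_(a, b)) : nF M ^+ 2 = frob2 M.
Proof. by rewrite sqr_sqrtr // frob2_ge0. Qed.

Lemma frob2_pair a b (M : 'M[R]_(a, b)) :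
  frob2 M = \sum_(q : 'I_a * 'I_b) M q.1 q.2 ^+ 2.
Proof. by rewrite /frob2 pair_bigA. Qed.

Lemma frob2_mul a b e (M : 'M[R]_(a, b)) (Q : 'M[R]_(b, e)) :
  frob2 (M *m Q) <= frob2 M * frob2 Q.
Proof.
rewrite /frob2 mulr_suml; apply: ler_sum => i _.
rewrite [X in _ * X]exchange_big /= mulr_sumr; apply: ler_sum => k _.
rewrite mxE; exact: cs_sq.
Qed.

Lemma nF_mul a b e (M : 'M[R]_(a, b)) (Q : 'M[R]_(b, e)) :
  nF (M *m Q) <= nF M * nF Q.
Proof.
rewrite /nF -sqrtrM ?frob2_ge0 // ler_sqrt; first exact: frob2_mul.
by apply: mulr_ge0; apply: frob2_ge0.
Qed.

Lemma nF_add a b (M Q : 'M[R]_(a, b)) : nF (M + Q) <= nF M + nF Q.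
Proof.
have h : frob2 (M + Q) <= (nF M + nF Q) ^+ 2.
  rewrite sqrrD !nF_sq !frob2_pair.
  have -> : \sum_(q : 'I_a * 'I_b) (M + Q) q.1 q.2 ^+ 2 =
     \sum_(q : 'I_a * 'I_b) M q.1 q.2 ^+ 2 + 
     (\sum_(q : 'I_a * 'I_b) M q.1 q.2 * Q q.1 q.2) *+ 2 + 
     \sum_(q : 'I_a * 'I_b) Q q.1 q.2 ^+ 2.
    rewrite -sumrMnl -!big_split /=; apply: eq_bigr => q _.
    by rewrite mxE sqrrD.
  rewrite lerD2r lerD2l lerMn2r /= /nF !frob2_pair; exact: cs.
rewrite /nF -[X in _ <= X]ger0_norm ?addr_ge0 ?nF_ge0 // -sqrtr_sqr ler_sqrt //.
exact: sqr_ge0.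
Qed.

Lemma nF_lip (sigma : R -> R) (B : R) a b (M Q : 'M[R]_(a, b)) :
  0 <= B -> lipschitz_with sigma B ->
  nF (smap sigma M - smap sigma Q) <= B * nF (M - Q).
Proof.
move=> B0 hl.
have h : frob2 (smap sigma M - smap sigma Q) <= B ^+ 2 * frob2 (M - Q).
  rewrite /frob2 mulr_sumr; apply: ler_sum => i _.
  rewrite mulr_sumr; apply: ler_sum => j _.
  rewrite !mxE.
  have h := hl (M i j) (Q i j).
  have hx := normr_ge0 (sigma (M i j) - sigma (Q i j)).
  have hy := normr_ge0 (M i j - Q i j).
  rewrite -[X in X <= _](real_normK (num_real _)) -[X in _ <= _ * X](real_normK (num_real _)).
  nra.
rewrite /nF -[B]ger0_norm // -sqrtr_sqr -sqrtrM ?sqr_ge0 // ler_sqrt //.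
by apply: mulr_ge0; [apply: sqr_ge0 | apply: frob2_ge0].
Qed.


Lemma frob2_col J (v : 'cV[R]_J) : frob2 v = \sum_(i < J) v i 0 ^+ 2.
Proof. by rewrite /frob2; apply: eq_bigr => i _; rewrite big_ord1. Qed.

Lemma xent_lip J (z z' a : 'cV[R]_J) :
  (forall j, a j 0 = 0 \/ a j 0 = 1) -> \sum_(j < J) a j 0 = 1 ->
  xent z a <= xent z' a + Num.sqrt 2 * nF (z - z').
Proof.
move=> ha hs.
case: (pickP (fun j => a j 0 == 1)) => [j0 /eqP h1 | hn]; last first.
  move: hs; rewrite big1 => [/eqP|j _]; first by rewrite eq_sym oner_eq0.
  by case: (ha j) => // h; move: (hn j); rewrite h eqxx.
have h0 : forall j, j != j0 -> a j 0 = 0.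
  have hr : \sum_(j < J | j != j0) a j 0 = 0.
    by move: hs; rewrite (bigD1 j0) //= h1; lra.
  move=> j hj; move/psumr_eq0P: hr; apply => //.
  by move=> i _; case: (ha i) => ->.
have Spos : forall w : 'cV[R]_J, 0 < \sum_(k < J) expR (w k 0).
  move=> w; rewrite (bigD1 j0) //=.
  have := expR_gt0 (w j0 0).
  have : 0 <= \sum_(k < J | k != j0) expR (w k 0) by apply: sumr_ge0 => k _; apply: ltW; apply: expR_gt0.
  lra.
have xe : forall w : 'cV[R]_J, xent w a = ln (\sum_(k < J) expR (w k 0)) - w j0 0.
  move=> w; rewrite /xent.
  set S := \sum_(k < J) expR (w k 0).
  have -> : \sum_(j < J) a j 0 * ln (expR (w j 0) / S) = a j0 0 * ln (expR (w j0 0) / S).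
    rewrite (bigD1 j0) //= big1 ?addr0 //.
    by move=> j hj; rewrite h0 // mul0r.
  rewrite h1 mul1r lnM ?posrE ?expR_gt0 ?invr_gt0 ?Spos // expRK lnV ?posrE ?Spos //.
  lra.
rewrite !xe.
set m := z j0 0 - z' j0 0 + Num.sqrt 2 * nF (z - z').
have hn0 : 0 <= Num.sqrt 2 * nF (z - z') by apply: mulr_ge0; [apply: sqrtr_ge0 | apply: nF_ge0].
have hk : forall k, z k 0 <= z' k 0 + m.
  move=> k; case: (eqVneq k j0) => [->|hkj]; first by rewrite /m; lra.
  suff : (z k 0 - z' k 0) - (z j0 0 - z' j0 0) <= Num.sqrt 2 * nF (z - z') by rewrite /m; lra.
  apply: le_trans (ler_norm _) _.
  rewrite -sqrtr_sqr /nF -sqrtrM // ler_sqrt; last first.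
    by apply: mulr_ge0 => //; apply: frob2_ge0.
  have hf : (z k 0 - z' k 0) ^+ 2 + (z j0 0 - z' j0 0) ^+ 2 <= frob2 (z - z').
    rewrite frob2_col (bigD1 j0) //= (bigD1 k) /=; last by rewrite hkj.
    rewrite !mxE.
    have : 0 <= \sum_(i < J | (i != j0) && (i != k)) (z - z') i 0 ^+ 2.
      by apply: sumr_ge0 => i _; apply: sqr_ge0.
    lra.
  have := sqr_ge0 ((z k 0 - z' k 0) + (z j0 0 - z' j0 0)).
  move: hf; set u := z k 0 - z' k 0; set v := z j0 0 - z' j0 0.
  rewrite !expr2 => hf hp. nra.
have hS : \sum_(k < J) expR (z k 0) <= expR m * \sum_(k < J) expR (z' k 0).
  rewrite mulr_sumr; apply: ler_sum => k _.
  by rewrite -expRD ler_expR addrC hk.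
have hL : ln (\sum_(k < J) expR (z k 0)) <= ln (expR m * \sum_(k < J) expR (z' k 0)).
  by rewrite ler_ln // posrE ?Spos ?mulr_gt0 ?expR_gt0 ?Spos.
move: hL; rewrite lnM ?posrE ?Spos ?expR_gt0 // expRK.
rewrite /m; lra.
Qed.


Lemma col_mulmx a b e (M : 'M[R]_(a, b)) (Q : 'M[R]_(b, e)) k :
  col k (M *m Q) = M *m col k Q.
Proof. by apply/matrixP => i j; rewrite !mxE; apply: eq_bigr => l _; rewrite !mxE. Qed.

Lemma col_addmx a b (M Q : 'M[R]_(a, b)) k : col k (M + Q) = col k M + col k Q.
Proof. by apply/matrixP => i j; rewrite !mxE. Qed.

Lemma col_submx a b (M Q : 'M[R]_(a, b)) k : col k (M - Q) = col k M - col k Q.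
Proof. by apply/matrixP => i j; rewrite !mxE. Qed.

Lemma col_smap (s : R -> R) a b (M : 'M[R]_(a, b)) k :
  col k (smap s M) = smap s (col k M).
Proof. by apply/matrixP => i j; rewrite !mxE. Qed.

Lemma col_bones a N (v : 'cV[R]_a) k : col k (v *m ones R N) = v.
Proof.
apply/matrixP => i j; rewrite !mxE big_ord1 !mxE mulr1.
by rewrite (ord1 j).
Qed.

End Aux.

Section Arch.
Variables (R : realType) (sigma : R -> R) (d L1 : nat) (m p n : nat -> nat).
Variable K : forall i : nat, 'M[R]_(m i, qin d p i).
Variable P : forall i : nat, 'M[R]_(p i, m i).
Variable b : forall i : nat, 'cV[R]_(m i).
Variable Wh : forall j : nat, 'M[R]_(n j, fin L1 p n j).
Variable bh : forall j : nat, 'cV[R]_(n j).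
Variable N : nat.
Variable X : 'M[R]_(d, N).

Fixpoint CM (i : nat) : 'M[R]_(m i, N) :=
  match i as i0 return 'M[R]_(m i0, N) with
  | 0 => K 0 *m X + b 0 *m ones R N
  | S j => K (S j) *m (P j *m smap sigma (CM j)) + b (S j) *m ones R N
  end.

Fixpoint FM (j : nat) : 'M[R]_(n j, N) :=
  match j as j0 return 'M[R]_(n j0, N) with
  | 0 => Wh 0 *m (P L1.-1 *m smap sigma (CM L1.-1)) + bh 0 *m ones R N
  | S k => Wh (S k) *m smap sigma (FM k) + bh (S k) *m ones R N
  end.

Lemma col_CM k i : col k (CM i) = conv_pre sigma K P b (col k X) i.
Proof.
elim: i => [|i IH] /=.
  by rewrite col_addmx col_mulmx col_bones.
by rewrite col_addmx col_bones !col_mulmx col_smap IH.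
Qed.

Lemma col_FM k j : col k (FM j) = fc_pre sigma K P b Wh bh (col k X) j.
Proof.
elim: j => [|j IH] /=.
  by rewrite col_addmx col_bones !col_mulmx col_smap col_CM.
by rewrite col_addmx col_bones !col_mulmx col_smap IH.
Qed.

End Arch.

Section Aux2.
Variable R : realType.

Lemma cs3 (A0 A1 A2 B0 B1 B2 : R) :
  0 <= A0 -> 0 <= A1 -> 0 <= A2 -> 0 <= B0 -> 0 <= B1 -> 0 <= B2 ->
  Num.sqrt A0 * Num.sqrt B0 + Num.sqrt A1 * Num.sqrt B1 + Num.sqrt A2 * Num.sqrt B2
  <= Num.sqrt (A0 + A1 + A2) * Num.sqrt (B0 + B1 + B2).
Proof.
move=> a0 a1 a2 b0 b1 b2.
have := @cs R _ [:: 0%N; 1%N; 2%N] (nth 0 [:: Num.sqrt A0; Num.sqrt A1; Num.sqrt A2])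
                          (nth 0 [:: Num.sqrt B0; Num.sqrt B1; Num.sqrt B2]).
by rewrite !big_cons !big_nil /= !addr0 !sqr_sqrtr // !addrA.
Qed.

Lemma cs_const (c : R) (k : nat) (a : nat -> R) :
  \sum_(0 <= t < k) c * a t <=
  Num.sqrt (c ^+ 2 * k%:R) * Num.sqrt (\sum_(0 <= t < k) a t ^+ 2).
Proof.
have := @cs R _ (index_iota 0 k) (fun=> c) a.
by rewrite sumr_const_nat subn0 mulr_natr.
Qed.

Lemma sum_ones (N : nat) (x : 'I_N -> R) :
  \sum_(i < N) x i <= Num.sqrt N%:R * Num.sqrt (\sum_(i < N) x i ^+ 2).
Proof.
have := @cs R _ (index_enum 'I_N) (fun=> 1) x.
rewrite (eq_bigr (fun i => x i)) => [|i _]; last by rewrite mul1r.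
by rewrite expr1n sumr_const card_ord.
Qed.

Lemma sum_col a N (M : 'M[R]_(a, N)) :
  \sum_(k < N) nF (col k M) <= Num.sqrt N%:R * nF M.
Proof.
apply: le_trans (sum_ones _) _.
rewrite /nF (eq_bigr (fun k => frob2 (col k M))) => [|k _]; last first.
  by rewrite sqr_sqrtr // frob2_ge0.
suff -> : \sum_(k < N) frob2 (col k M) = frob2 M by [].
rewrite /frob2 exchange_big /=; apply: eq_bigr => i _.
by apply: eq_bigr => k _; rewrite big_ord1 mxE.
Qed.

Lemma pow_le_q (B : R) (e L : nat) : 0 < B -> (1 <= e)%N -> (e <= L)%N ->
  B ^+ e <= (if B <= 1 then B else B ^+ L).
Proof.
move=> B0 h1 h2; case: ifP => hB.
  by rewrite -{2}(expr1 B); apply: ler_wiXn2l => //; apply: ltW.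
apply: ler_weXn2l => //; rewrite leNgt in hB.
by apply: ltW; move/negbFE: hB.
Qed.

End Aux2.

Lemma step_bound (R : realType) (sigma : R -> R) (B : R) a b' c' 
  (M : 'M[R]_(a, b')) (Y Z : 'M[R]_(b', c')) (res : 'M[R]_(a, c')) :
  0 <= B -> lipschitz_with sigma B ->
  nF (M *m (smap sigma Y - smap sigma Z) + res) <= nF M * B * nF (Y - Z) + nF res.
Proof.
move=> B0 hl; apply: le_trans (nF_add _ _) _; rewrite lerD2r.
apply: le_trans (nF_mul _ _) _; rewrite -mulrA; apply: ler_wpM2l; first exact: nF_ge0.
exact: nF_lip.
Qed.

Lemma mx_split (R : realType) a b' c' (M : 'M[R]_(a, b')) (Y Z : 'M[R]_(b', c')) (bb cc : 'M[R]_(a, c')) :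
  M *m Y + bb - cc = M *m (Y - Z) + (M *m Z + bb - cc).
Proof. by rewrite mulmxBr !addrA subrK. Qed.

Lemma final_arith (R : realType) (C q sq x y : R) :
  0 <= q -> sq ^+ 2 = 2 -> 0 <= sq -> sq <= C -> 2 * q <= C -> 1 <= x -> 1 <= y ->
  1 + 2 * q ^+ 2 * x + 2 * q ^+ 2 * y <= C ^+ 2 * (x + y).
Proof.
move=> q0 s2 s0 h1 h2 hx hy.
have d1 : 0 <= C - sq by rewrite subr_ge0.
have d2 : 0 <= C - 2 * q by rewrite subr_ge0.
have C0 : 0 <= C by apply: le_trans h1.
have e1 : 2 <= C ^+ 2.
  have h := mulr_ge0 d1 (addr_ge0 C0 s0).
  rewrite -s2 -subr_ge0; apply: le_trans h _; rewrite le_eqVlt; apply/orP; left; apply/eqP; ring.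
have e2 : 4 * q ^+ 2 <= C ^+ 2.
  have h := mulr_ge0 d2 (addr_ge0 C0 (mulr_ge0 (ler0n _ 2) q0)).
  rewrite -subr_ge0; apply: le_trans h _; rewrite le_eqVlt; apply/orP; left; apply/eqP; ring.
have f1 : 0 <= C ^+ 2 - 2 by rewrite subr_ge0.
have f2 : 0 <= C ^+ 2 - 4 * q ^+ 2 by rewrite subr_ge0.
have x0 : 0 <= x by apply: le_trans hx.
have y0 : 0 <= y by apply: le_trans hy.
have h5 := mulr_ge0 f1 (addr_ge0 x0 y0).
have h6 := mulr_ge0 f2 (addr_ge0 x0 y0).
move: h5 h6; set u := C ^+ 2; set w := q ^+ 2 => h5 h6.
have E1 : (u - 2) * (x + y) = u * x + u * y - 2 * x - 2 * y by ring.
have E2 : (u - 4 * w) * (x + y) = u * x + u * y - 4 * (w * x) - 4 * (w * y) by ring.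
rewrite E1 in h5; rewrite E2 in h6.
have E3 : u * (x + y) = u * x + u * y by ring.
have E4 : 2 * w * x = 2 * (w * x) by ring.
have E5 : 2 * w * y = 2 * (w * y) by ring.
rewrite E3 E4 E5.
lra.
Qed.

Unset Implicit Arguments.

Theorem theorem4p1 (R : realType) (sigma : R -> R) (B : R)
  (d J N L1 L2 : nat) (m p n : nat -> nat)
  (X : 'M[R]_(d, N)) (A : 'M[R]_(J, N))
  (K : forall i : nat, 'M[R]_(m i, qin d p i))
  (P : forall i : nat, 'M[R]_(p i, m i))
  (b : forall i : nat, 'cV[R]_(m i))
  (c : forall i : nat, 'M[R]_(m i, N))
  (Wh : forall j : nat, 'M[R]_(n j, fin L1 p n j))
  (bh : forall j : nat, 'cV[R]_(n j))
  (ch : forall j : nat, 'M[R]_(n j, N))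
  (Wl : 'M[R]_(J, n L2.-2)) :
  (1 <= L1)%N -> (2 <= L2)%N ->
  one_hot_cols A ->
  0 < B -> lipschitz_with sigma B ->
  Lmean (@phi_CNN_mat R sigma d J L1 L2 m p n K P b Wh bh Wl N X) A
  <= Num.max (Num.max (Num.sqrt 2) (2 * B)) (2 * B ^+ (L1 + L2 - 1))
     * Num.sqrt ((L1 + L2 - 1)%:R)
     * @LS_CNN R sigma d J L1 L2 m p n K P b Wh bh Wl N c ch X A.
Proof.
move=> hL1 hL2 hA hB hlip.
have B0 : 0 <= B by apply: ltW.
have [L1' EL1] : exists L1', L1 = L1'.+1 by exists L1.-1; rewrite prednK.
have [L2' EL2] : exists L2', L2 = L2'.+2 by exists L2.-2; rewrite -(subnKC hL2).
subst L1 L2.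
pose CMi := CM sigma K P b X.
pose FMj := FM sigma K P b Wh bh X.
pose Dl := Wl *m smap sigma (FMj L2') - Wl *m smap sigma (ch L2').
pose e i := nF (CMi i - c i).
pose g j := nF (FMj j - ch j).
pose r i := nF (conv_res sigma K P b c X i).
pose s j := nF (fc_res sigma P Wh bh c ch j).
have Ephi : phi_CNN_mat sigma K P b Wh bh Wl X = Wl *m smap sigma (FMj L2').
  apply/matrixP => i k; rewrite mxE.
  rewrite (_ : (Wl *m smap sigma (FMj L2')) i k = col k (Wl *m smap sigma (FMj L2')) i 0); last by rewrite !mxE.
  by rewrite col_mulmx col_smap /FMj col_FM.
have hR0 : e 0%N = r 0%N by [].
have hRc : forall i, e i.+1 <= nF (K i.+1 *m P i) * B * e i + r i.+1.
  move=> i; rewrite /e /r.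
  have -> : CMi i.+1 - c i.+1 = (K i.+1 *m P i) *m (smap sigma (CMi i) - smap sigma (c i))
                             + conv_res sigma K P b c X i.+1.
    by rewrite /= -mulmxA mulmxBr -mx_split.
  exact: step_bound.
have hRf0 : g 0%N <= nF (Wh 0%N *m P L1') * B * e L1' + s 0%N.
  rewrite /g /s /e.
  have -> : FMj 0%N - ch 0%N = (Wh 0%N *m P L1') *m (smap sigma (CMi L1') - smap sigma (c L1'))
                             + fc_res sigma P Wh bh c ch 0%N.
    by rewrite /= -mulmxA mulmxBr -mx_split.
  exact: step_bound.
have hRf : forall j, g j.+1 <= nF (Wh j.+1) * B * g j + s j.+1.
  move=> j; rewrite /g /s.
  have -> : FMj j.+1 - ch j.+1 = Wh j.+1 *m (smap sigma (FMj j) - smap sigma (ch j))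
                             + fc_res sigma P Wh bh c ch j.+1.
    by rewrite /= -mx_split.
  exact: step_bound.
have hRt : nF Dl <= nF Wl * B * g L2'.
  rewrite /Dl -mulmxBr; apply: le_trans (nF_mul _ _) _.
  rewrite -mulrA; apply: ler_wpM2l; first exact: nF_ge0.
  exact: nF_lip.
have FCc : forall k j, (j + k = L2')%N ->
   nF Dl <= B ^+ k.+1 * Num.sqrt (omegah Wh Wl j) * g j
     + \sum_(j.+1 <= t < L2'.+1) B ^+ (L2'.+1 - t) * Num.sqrt (omegah Wh Wl t) * s t.
  elim => [|k IH] j hjk.
    rewrite addn0 in hjk; subst j.
    rewrite big_geq // addr0 /omegah big_geq // mul1r expr1 -/(nF Wl).
    by rewrite (mulrC B).
  have hj : (j.+1 + k = L2')%N by rewrite addSnnS.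
  apply: le_trans (IH _ hj) _.
  have ho : omegah Wh Wl j = frob2 (Wh j.+1) * omegah Wh Wl j.+1.
    by rewrite /omegah big_ltn ?mulrA //=; lia.
  rewrite ho (sqrtrM _ (frob2_ge0 (Wh j.+1))) -/(nF (Wh j.+1)) (@big_ltn _ _ _ j.+1); last by lia.
  have -> : (L2'.+1 - j.+1 = k.+1)%N by lia.
  have hr := hRf j.
  have h0 : 0 <= B ^+ k.+1 * Num.sqrt (omegah Wh Wl j.+1).
    by apply: mulr_ge0; [apply: exprn_ge0 | apply: sqrtr_ge0].
  have := ler_wpM2l h0 hr.
  rewrite (exprS B k.+1).
  set Bk := B ^+ k.+1; set so := Num.sqrt _; set SS := \sum_(_ <= _ < _) _.
  move=> h; lra.
have omh0 : forall j, 0 <= omegah Wh Wl j.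
  move=> j; apply: mulr_ge0; last exact: frob2_ge0.
  by apply: prodr_ge0 => k _; apply: frob2_ge0.
have om0 : forall i, 0 <= omega K P Wh Wl i.
  move=> i; apply: mulr_ge0.
    apply: mulr_ge0; last exact: frob2_ge0.
    apply: mulr_ge0; last exact: frob2_ge0.
    by apply: prodr_ge0 => k _; apply: frob2_ge0.
  by apply: prodr_ge0 => -[|k] _ //=; apply: frob2_ge0.
have CVc : forall k i, (i + k = L1')%N ->
   nF Dl <= B ^+ (L2'.+1 + k.+1) * Num.sqrt (omega K P Wh Wl i) * e i
     + \sum_(i.+1 <= t < L1'.+1) B ^+ (L2'.+1 + (L1'.+1 - t)) * Num.sqrt (omega K P Wh Wl t) * r t
     + \sum_(0 <= t < L2'.+1) B ^+ (L2'.+1 - t) * Num.sqrt (omegah Wh Wl t) * s t.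
  elim => [|k IH] i hik.
    rewrite addn0 in hik; subst i.
    have hol : omega K P Wh Wl L1' = omegah Wh Wl 0%N * frob2 (Wh 0%N *m P L1').
      by rewrite /omega big_geq // mulr1.
    rewrite big_geq // addr0 hol (sqrtrM _ (omh0 0%N)) -/(nF (Wh 0%N *m P L1')).
    rewrite (@big_ltn _ _ _ 0%N) // subn0 addn1 (exprS B L2'.+1).
    apply: le_trans (FCc L2' 0%N (add0n _)) _.
    have h0 : 0 <= B ^+ L2'.+1 * Num.sqrt (omegah Wh Wl 0%N).
      by apply: mulr_ge0; [apply: exprn_ge0 | apply: sqrtr_ge0].
    have := ler_wpM2l h0 hRf0.
    set Bk := B ^+ L2'.+1; set so := Num.sqrt _; set SS := \sum_(_ <= _ < _) _.
    move=> h; lra.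
  have hi : (i.+1 + k = L1')%N by rewrite addSnnS.
  apply: le_trans (IH _ hi) _.
  have ho : omega K P Wh Wl i = frob2 (K i.+1 *m P i) * omega K P Wh Wl i.+1.
    rewrite /omega big_ltn; last lia.
    by rewrite mulrCA.
  rewrite ho (sqrtrM _ (frob2_ge0 (K i.+1 *m P i))) -/(nF (K i.+1 *m P i)).
  rewrite (@big_ltn _ _ _ i.+1); last by lia.
  have -> : (L2'.+1 + (L1'.+1 - i.+1) = L2'.+1 + k.+1)%N by lia.
  rewrite (addnS L2'.+1 k.+1) (exprS B (L2'.+1 + k.+1)).
  have h0 : 0 <= B ^+ (L2'.+1 + k.+1) * Num.sqrt (omega K P Wh Wl i.+1).
    by apply: mulr_ge0; [apply: exprn_ge0 | apply: sqrtr_ge0].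
  have := ler_wpM2l h0 (hRc i).
  set Bk := B ^+ _; set so := Num.sqrt (omega _ _ _ _ _).
  set SS := \sum_(i.+2 <= _ < _) _; set SF := \sum_(0 <= _ < _) _.
  move=> h; lra.
have hD := CVc L1' 0%N (add0n _).
rewrite hR0 in hD.
pose q := if B <= 1 then B else B ^+ (L1'.+1 + L2'.+2 - 1).
have q0 : 0 <= q by rewrite /q; case: ifP => _ //; apply: exprn_ge0.
pose S1 := \sum_(0 <= t < L1'.+1) Num.sqrt (omega K P Wh Wl t) * r t.
pose S2 := \sum_(0 <= t < L2'.+1) Num.sqrt (omegah Wh Wl t) * s t.
have hDq : nF Dl <= q * S1 + q * S2.
  have hD' : nF Dl <= \sum_(0 <= t < L1'.+1) B ^+ (L2'.+1 + (L1'.+1 - t)) * Num.sqrt (omega K P Wh Wl t) * r t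
     + \sum_(0 <= t < L2'.+1) B ^+ (L2'.+1 - t) * Num.sqrt (omegah Wh Wl t) * s t.
    by rewrite (@big_ltn _ _ _ 0%N (L1'.+1)) // subn0 addrA.
  apply: le_trans hD' _; rewrite /S1 /S2 !mulr_sumr; apply: lerD; apply: ler_sum_nat => t ht;
    rewrite -[X in X <= _]mulrA; apply: ler_wpM2r;
    try (by apply: mulr_ge0; [apply: sqrtr_ge0 | apply: nF_ge0]);
    apply: pow_le_q => //; lia.
pose top := Wl *m smap sigma (ch L2').
pose T0 := frob2 (Lvec top A).
have hxent : forall k : 'I_N,
    xent (col k (phi_CNN_mat sigma K P b Wh bh Wl X)) (col k A)
    <= xent (col k top) (col k A) + Num.sqrt 2 * nF (col k Dl).
  move=> k; rewrite Ephi /Dl col_submx; apply: xent_lip.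
    by move=> j; rewrite mxE; exact: (hA k).1 j.
  by rewrite -(hA k).2; apply: eq_bigr => j _; rewrite mxE.
have hsum : \sum_(k < N) xent (col k (phi_CNN_mat sigma K P b Wh bh Wl X)) (col k A)
    <= Num.sqrt N%:R * Num.sqrt T0 + Num.sqrt 2 * (Num.sqrt N%:R * nF Dl).
  apply: le_trans (ler_sum _ (fun k _ => hxent k)) _.
  rewrite big_split /= -mulr_sumr; apply: lerD.
    apply: le_trans (sum_ones _) _.
    suff -> : \sum_(i < N) xent (col i top) (col i A) ^+ 2 = T0 by [].
    by rewrite /T0 /frob2 big_ord1; apply: eq_bigr => i _; rewrite mxE.
  by apply: ler_wpM2l; [apply: sqrtr_ge0 | apply: sum_col].
pose A1 := (Num.sqrt 2 * q) ^+ 2 * (L1'.+1)%:R.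
pose A2 := (Num.sqrt 2 * q) ^+ 2 * (L2'.+1)%:R.
pose B1 := \sum_(0 <= t < L1'.+1) (Num.sqrt (omega K P Wh Wl t) * r t) ^+ 2.
pose B2 := \sum_(0 <= t < L2'.+1) (Num.sqrt (omegah Wh Wl t) * s t) ^+ 2.
have hB1 : B1 = \sum_(0 <= t < L1'.+1) omega K P Wh Wl t * frob2 (conv_res sigma K P b c X t).
  by apply: eq_bigr => t _; rewrite exprMn sqr_sqrtr // /r nF_sq.
have hB2 : B2 = \sum_(0 <= t < L2'.+1) omegah Wh Wl t * frob2 (fc_res sigma P Wh bh c ch t).
  by apply: eq_bigr => t _; rewrite exprMn sqr_sqrtr // /s nF_sq.
have b1 : 0 <= B1 by apply: sumr_ge0 => t _; apply: sqr_ge0.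
have b2 : 0 <= B2 by apply: sumr_ge0 => t _; apply: sqr_ge0.
have a1 : 0 <= A1 by apply: mulr_ge0; [apply: sqr_ge0 | apply: ler0n].
have a2 : 0 <= A2 by apply: mulr_ge0; [apply: sqr_ge0 | apply: ler0n].
have t0 : 0 <= T0 by apply: frob2_ge0.
have hmain : Num.sqrt T0 + Num.sqrt 2 * (q * S1 + q * S2)
    <= Num.sqrt (1 + A1 + A2) * Num.sqrt (T0 + B1 + B2).
  have c1 := cs_const (Num.sqrt 2 * q) L1'.+1 (fun t => Num.sqrt (omega K P Wh Wl t) * r t).
  have c2 := cs_const (Num.sqrt 2 * q) L2'.+1 (fun t => Num.sqrt (omegah Wh Wl t) * s t).
  have c3 := @cs3 R 1 A1 A2 T0 B1 B2 ler01 a1 a2 t0 b1 b2.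
  rewrite sqrtr1 mul1r in c3.
  apply: le_trans c3.
  rewrite mulrDr !mulrA /S1 /S2 !mulr_sumr addrA.
  by apply: lerD; [apply: lerD|].
have ET : Tlift sigma K P b Wh bh Wl c ch X A = T0 + B1 + B2.
  by rewrite hB1 hB2.
rewrite /Lmean /LS_CNN ET.
set T := T0 + B1 + B2.
set C := Num.max _ _.
have hS : \sum_(k < N) xent (col k (phi_CNN_mat sigma K P b Wh bh Wl X)) (col k A)
    <= Num.sqrt N%:R * (Num.sqrt (1 + A1 + A2) * Num.sqrt T).
  apply: le_trans hsum _.
  apply: le_trans (ler_wpM2l (sqrtr_ge0 _) hmain).
  rewrite mulrDr mulrCA lerD2l; apply: ler_wpM2l; first exact: sqrtr_ge0.
  by apply: ler_wpM2l; [apply: sqrtr_ge0 | exact: hDq].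
have hNs : forall M : nat, M%:R^-1 * Num.sqrt (M%:R : R) = (Num.sqrt (M%:R : R))^-1.
  case=> [|M]; first by rewrite sqrtr0 invr0 mulr0.
  have hN : Num.sqrt (M.+1%:R : R) != 0 by rewrite sqrtr_eq0 -ltNge ltr0Sn.
  by rewrite -{1}(sqr_sqrtr (ler0n R M.+1)) expr2 invfM divfK.
have hC1 : Num.sqrt 2 <= C by rewrite /C !le_max lexx.
have hC2 : 2 * q <= C by rewrite /C /q; case: ifP => _; rewrite !le_max lexx ?orbT.
have hC : Num.sqrt (1 + A1 + A2) <= C * Num.sqrt (L1'.+1 + L2'.+2 - 1)%:R.
  have C0 : 0 <= C by apply: le_trans hC1; apply: sqrtr_ge0.
  rewrite -[C in X in _ <= X]ger0_norm // -sqrtr_sqr -sqrtrM ?sqr_ge0 // ler_sqrt; last first.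
    by apply: mulr_ge0; [apply: sqr_ge0 | apply: ler0n].
  have -> : (L1'.+1 + L2'.+2 - 1 = L1'.+1 + L2'.+1)%N by rewrite addnS subn1.
  rewrite /A1 /A2 natrD exprMn sqr_sqrtr //.
  have s2 : Num.sqrt (2 : R) ^+ 2 = 2 by rewrite sqr_sqrtr // ler0n.
  apply: (final_arith q0 s2 (sqrtr_ge0 _) hC1 hC2); by rewrite ler1n.
apply: le_trans (ler_wpM2l _ hS) _; first by rewrite invr_ge0 ler0n.
rewrite [X in X <= _]mulrA hNs [X in X <= _]mulrCA; apply: ler_wpM2r => //.
by apply: mulr_ge0; [rewrite invr_ge0 sqrtr_ge0 | apply: sqrtr_ge0].
Qed.
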